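(* If $\tau\in\mathcal{L}$ and $C(\tau)$ is a meager subset of the Euclidean space $\mathbb{R}$, then $(\mathbb{R},\tau)$ is a Baire space.
   Context: $\eta$ denotes the Euclidean topology on $\mathbb{R}$. $\mathcal{L}$ denotes the family of all Hausdorff topologies $\tau$ on $\mathbb{R}$ with $\tau\subset\eta$. For $\tau\in\mathcal{L}$ and $a\in\mathbb{R}$ let $\mathcal{N}_\tau(a)$ be the neighborhood filter of $a$ in $(\mathbb{R},\tau)$; $C(\tau)$ is the set of all $a\in\mathbb{R}$ with $\mathcal{N}_\tau(a)\neq\mathcal{N}_\eta(a)$. *)

(* Defs.v *)
From Stdlib Require Import Reals Rtopology.
Open Scope R_scope.

Definition is_topology (tau : (R -> Prop) -> Prop) : Prop :=
  tau (fun _ => False) /\ tau (fun _ => True) /\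
  (forall (F : (R -> Prop) -> Prop),
      (forall U, F U -> tau U) -> tau (fun x => exists U, F U /\ U x)) /\
  (forall U V, tau U -> tau V -> tau (fun x => U x /\ V x)).

Definition hausdorff (tau : (R -> Prop) -> Prop) : Prop :=
  forall x y, x <> y -> exists U V, tau U /\ tau V /\ U x /\ V y /\
    (forall z, ~ (U z /\ V z)).

Definition eta (U : R -> Prop) : Prop := open_set U.

Definition in_L (tau : (R -> Prop) -> Prop) : Prop :=
  is_topology tau /\ hausdorff tau /\ (forall U, tau U -> eta U).

Definition nbhd_filter (tau : (R -> Prop) -> Prop) (a : R) (V : R -> Prop) : Prop :=
  exists U, tau U /\ U a /\ (forall x, U x -> V x).

Definition Cset (tau : (R -> Prop) -> Prop) (a : R) : Prop :=
  ~ (forall V, nbhd_filter tau a V <-> nbhd_filter eta a V).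

Definition closure (tau : (R -> Prop) -> Prop) (A : R -> Prop) (x : R) : Prop :=
  forall U, tau U -> U x -> exists y, U y /\ A y.

Definition interior (tau : (R -> Prop) -> Prop) (A : R -> Prop) (x : R) : Prop :=
  exists U, tau U /\ U x /\ (forall y, U y -> A y).

Definition nowhere_dense (tau : (R -> Prop) -> Prop) (A : R -> Prop) : Prop :=
  forall x, ~ interior tau (closure tau A) x.

Definition meager (tau : (R -> Prop) -> Prop) (A : R -> Prop) : Prop :=
  exists B : nat -> R -> Prop,
    (forall n, nowhere_dense tau (B n)) /\
    (forall x, A x -> exists n, B n x).

Definition dense (tau : (R -> Prop) -> Prop) (D : R -> Prop) : Prop :=
  forall x, closure tau D x.

Definition baire_space (tau : (R -> Prop) -> Prop) : Prop :=
  forall G : nat -> R -> Prop,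
    (forall n, tau (G n) /\ dense tau (G n)) ->
    dense tau (fun x => forall n, G n x).

(* Main.v *)
Require Import Defs.
From Stdlib Require Import Reals Rtopology Lra Classical ClassicalEpsilon.
Open Scope R_scope.

Lemma open_interval a b : open_set (fun y => a < y < b).
Proof.
  intros y Hy. assert (Hd : 0 < Rmin (y - a) (b - y)) by (apply Rmin_glb_lt; lra).
  exists (mkposreal _ Hd). intros z Hz. unfold disc in Hz; simpl in Hz.
  pose proof (Rmin_l (y-a) (b-y)). pose proof (Rmin_r (y-a) (b-y)).
  apply Rabs_def2 in Hz. lra.
Qed.

Lemma open_to_interval V y : open_set V -> V y ->
  exists a b, a < y < b /\ forall z, a < z < b -> V z.
Proof.
  intros HV Hy. destruct (HV y Hy) as [d Hd].
  exists (y - d), (y + d). pose proof (cond_pos d). split. lra.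
  intros z Hz. apply Hd. unfold disc. apply Rabs_def1; lra.
Qed.

Definition idense (O : R -> Prop) := forall a b, a < b -> exists y, a < y < b /\ O y.

Lemma step (O : R -> Prop) a b : open_set O -> idense O -> a < b ->
  exists a' b', a < a' /\ a' < b' /\ b' < b /\ forall z, a' <= z <= b' -> O z.
Proof.
  intros HO HD Hab. destruct (HD a b Hab) as [y [Hy Oy]].
  destruct (open_to_interval O y HO Oy) as [a2 [b2 [H2 H2']]].
  pose proof (Rmin_l (y-a) (b-y)) as L1. pose proof (Rmin_r (y-a) (b-y)) as L2.
  pose proof (Rmin_l (y-a2) (b2-y)) as L3. pose proof (Rmin_r (y-a2) (b2-y)) as L4.
  assert (P1 : 0 < Rmin (y-a) (b-y)) by (apply Rmin_glb_lt; lra).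
  assert (P2 : 0 < Rmin (y-a2) (b2-y)) by (apply Rmin_glb_lt; lra).
  revert L1 L2 L3 L4 P1 P2.
  generalize (Rmin (y-a) (b-y)) (Rmin (y-a2) (b2-y)). intros m1 m2 L1 L2 L3 L4 P1 P2.
  pose proof (Rmin_l m1 m2). pose proof (Rmin_r m1 m2).
  assert (0 < Rmin m1 m2) by (apply Rmin_glb_lt; lra).
  revert H H0 H1. generalize (Rmin m1 m2). intros e H H0 H1.
  exists (y - e / 2), (y + e / 2).
  split; [lra|split;[lra|split;[lra|]]]. intros z Hz. apply H2'. lra.
Qed.

Fixpoint iterseq (F : nat -> R*R -> R*R) (p0 : R*R) (n:nat) : R*R :=
  match n with O => p0 | S k => F k (iterseq F p0 k) end.

Lemma baire_R (O : nat -> R -> Prop) :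
  (forall n, open_set (O n)) -> (forall n, idense (O n)) ->
  forall a b, a < b -> exists x, a < x < b /\ forall n, O n x.
Proof.
  intros HO HD a b Hab.
  assert (Hst : forall n (p : R*R), exists q : R*R, fst p < snd p ->
     fst p < fst q /\ fst q < snd q /\ snd q < snd p /\
     forall z, fst q <= z <= snd q -> O n z).
  { intros n [p1 p2]. destruct (classic (p1 < p2)) as [H|H].
    - destruct (step (O n) p1 p2 (HO n) (HD n) H) as [a' [b' Hq]].
      exists (a', b'). simpl. intros _. exact Hq.
    - exists (0,0). simpl. intro; contradiction. }
  set (F := fun n p => proj1_sig (constructive_indefinite_description _ (Hst n p))).
  assert (HF : forall n p, fst p < snd p ->
     fst p < fst (F n p) /\ fst (F n p) < snd (F n p) /\ snd (F n p) < snd p /\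
     forall z, fst (F n p) <= z <= snd (F n p) -> O n z).
  { intros n p. unfold F. destruct (constructive_indefinite_description _ (Hst n p)); auto. }
  set (s := iterseq F (a,b)).
  assert (Hlt : forall n, fst (s n) < snd (s n)).
  { induction n. simpl. exact Hab. simpl. apply HF. exact IHn. }
  assert (HS : forall n, fst (s n) < fst (s (S n)) /\ snd (s (S n)) < snd (s n) /\
     forall z, fst (s (S n)) <= z <= snd (s (S n)) -> O n z).
  { intro n. destruct (HF n (s n) (Hlt n)) as [h1 [h2 [h3 h4]]]. simpl. auto. }
  assert (Hmono : forall m k, fst (s m) <= fst (s (m + k)%nat) /\ snd (s (m + k)%nat) <= snd (s m)).
  { intros m k. induction k. rewrite Nat.add_0_r. lra.
    rewrite Nat.add_succ_r. destruct (HS (m + k)%nat). lra. }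
  assert (Hcross : forall m k, fst (s m) < snd (s k)).
  { intros m k. destruct (Nat.le_ge_cases m k) as [H|H].
    - destruct (Nat.le_exists_sub m k H) as [p [-> _]].
      rewrite Nat.add_comm. destruct (Hmono m p). pose proof (Hlt (m+p)%nat). lra.
    - destruct (Nat.le_exists_sub k m H) as [p [-> _]].
      rewrite Nat.add_comm. destruct (Hmono k p). pose proof (Hlt (k+p)%nat). lra. }
  set (E := fun x => exists n, x = fst (s n)).
  assert (Hb : bound E). { exists (snd (s 0%nat)). intros x [n ->]. left. apply Hcross. }
  destruct (completeness E Hb (ex_intro _ (fst (s 0%nat)) (ex_intro _ 0%nat eq_refl))) as [x [Hub Hlub]].
  assert (Hin : forall n, fst (s n) <= x <= snd (s n)).
  { intro n. split. apply Hub. exists n. reflexivity.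
    apply Hlub. intros y [m ->]. left. apply Hcross. }
  exists x. split.
  - destruct (HS 0%nat) as [h1 [h2 _]]. pose proof (Hin 1%nat). simpl in h1, h2. lra.
  - intro n. apply (proj2 (proj2 (HS n))). apply Hin.
Qed.

Lemma comp_closure_open B : open_set (fun y => ~ closure eta B y).
Proof.
  intros y Hy. unfold closure in Hy.
  apply not_all_ex_not in Hy as [U HU].
  apply imply_to_and in HU as [HUo HU]. apply imply_to_and in HU as [HUy HU].
  destruct (HUo y HUy) as [d Hd]. exists d. intros z Hz Hc.
  apply HU. apply (Hc U HUo (Hd z Hz)).
Qed.

Lemma nd_idense B : nowhere_dense eta B -> idense (fun y => ~ closure eta B y).
Proof.
  intros HB a b Hab. apply NNPP. intro Hn.
  apply (HB ((a+b)/2)). exists (fun y => a < y < b). split. apply open_interval.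
  split. lra. intros y Hy. apply NNPP. intro Hc. apply Hn. exists y. auto.
Qed.

Theorem proposition4 (tau : (R -> Prop) -> Prop) :
  in_L tau -> meager eta (Cset tau) -> baire_space tau.
Proof.
  intros [Htop [_ Hsub]] [B [HB HC]] G HG.
  assert (HD : forall a b, a < b -> exists c, a < c < b /\ ~ Cset tau c).
  { intros a b Hab.
    destruct (baire_R (fun n y => ~ closure eta (B n) y)
                (fun n => comp_closure_open (B n)) (fun n => nd_idense _ (HB n)) a b Hab)
      as [c [Hc Hn]].
    exists c. split. exact Hc. intro Hcs. destruct (HC c Hcs) as [n Hbn].
    apply (Hn n). intros U _ HU. exists c. auto. }
  assert (HGd : forall n, idense (G n)).
  { intros n a b Hab. destruct (HD a b Hab) as [c [Hc Hnc]].
    unfold Cset in Hnc. apply NNPP in Hnc.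
    assert (Hn : nbhd_filter eta c (fun y => a < y < b)).
    { exists (fun y => a < y < b). split. apply open_interval. split. exact Hc. auto. }
    apply Hnc in Hn. destruct Hn as [U [HU [HUc HUi]]].
    destruct (proj2 (HG n) c U HU HUc) as [y [Uy Gy]].
    exists y. auto. }
  intros x U HU HUx.
  destruct (open_to_interval U x (Hsub U HU) HUx) as [a [b [Hx Hab]]].
  destruct (baire_R G (fun n => Hsub _ (proj1 (HG n))) HGd a b ltac:(lra)) as [y [Hy Hn]].
  exists y. auto.
Qed.
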